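(* Let $S>1/2$ and $\beta<1/2$. Then for every $t\in\mathbb{R}$ the trilinear operator $R_3$ defined in the context satisfies $$\|R_3(u,v,w)\|_{\dot H^{-S}}\le c_6'(S,\beta)\|u\|_{\dot H^{-\beta}}\|v\|_{\dot H^0}\|w\|_{\dot H^0},$$ with a constant $c_6'(S,\beta)$ depending only on $S,\beta$.
   Context: Write $\mathbb{Z}_0=\mathbb{Z}\setminus\{0\}$. For $s\in\mathbb{R}$, $\dot H^s$ denotes the Hilbert space of complex sequences $v=(v_k)_{k\in\mathbb{Z}_0}$ with $\|v\|_{\dot H^s}^2=\sum_{k\in\mathbb{Z}_0}|k|^{2s}|v_k|^2<\infty$. For $t\in\mathbb{R}$, $$R_3(u,v,w)_k=\sum_{k_1+k_2+k_3=k,\ k_1,k_2,k_3\in\mathbb{Z}_0}\frac{e^{3i(k_1+k_2)(k_2+k_3)(k_3+k_1)t}}{k_1}u_{k_1}v_{k_2}w_{k_3},\qquad k\in\mathbb{Z}_0.$$ *)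

(* Defs.v *)
From Stdlib Require Import Reals ZArith.
From Coquelicot Require Import Coquelicot.
Open Scope R_scope.

(* A sequence indexed by Z_0 = Z \ {0} is represented as a function Z -> C;
   its value at 0 is never used by any definition below. *)
Definition seqZ0 := Z -> C.

(* Enumeration of Z_0 : 0 |-> 1, 1 |-> -1, 2 |-> 2, 3 |-> -2, ... (a bijection nat -> Z_0). *)
Definition zenum (n : nat) : Z :=
  if Nat.even n then Z.of_nat (Nat.div2 n + 1) else (- Z.of_nat (Nat.div2 n + 1))%Z.

Definition kpow (s : R) (k : Z) : R := Rpower (IZR (Z.abs k)) (2 * s).

Definition Hdot_terms (s : R) (v : seqZ0) (n : nat) : R :=
  kpow s (zenum n) * (Cmod (v (zenum n)))^2.

Definition in_Hdot (s : R) (v : seqZ0) : Prop := ex_series (Hdot_terms s v).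

Definition Hdot_norm (s : R) (v : seqZ0) : R := sqrt (Series (Hdot_terms s v)).

(* value of a complex series (meaningful when it converges) *)
Definition CSeries (a : nat -> C) : C :=
  (Series (fun n => fst (a n)), Series (fun n => snd (a n))).

Definition cexpi (theta : R) : C := (cos theta, sin theta).

Definition R3_term (t : R) (u v w : seqZ0) (k k1 k2 : Z) : C :=
  let k3 := (k - k1 - k2)%Z in
  if Z.eqb k3 0 then RtoC 0 else
  Cmult (Cmult (Cmult
    (Cdiv (cexpi (3 * IZR ((k1 + k2) * (k2 + k3) * (k3 + k1)) * t)) (RtoC (IZR k1)))
    (u k1)) (v k2)) (w k3).

(* R_3(u,v,w)_k = sum over k1,k2,k3 in Z_0 with k1+k2+k3 = k, written as the
   iterated sum over k1 in Z_0, then k2 in Z_0 (k3 = k - k1 - k2 must be nonzero). *)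
Definition R3 (t : R) (u v w : seqZ0) : seqZ0 :=
  fun k => CSeries (fun n1 => CSeries (fun n2 => R3_term t u v w k (zenum n1) (zenum n2))).

(* absolute summability of the series defining R_3(u,v,w)_k over
   {(k1,k2,k3) in Z_0^3 : k1+k2+k3 = k} (iterated, Tonelli form) *)
Definition R3_abs_summable (t : R) (u v w : seqZ0) (k : Z) : Prop :=
  (forall n1, ex_series (fun n2 => Cmod (R3_term t u v w k (zenum n1) (zenum n2)))) /\
  ex_series (fun n1 => Series (fun n2 => Cmod (R3_term t u v w k (zenum n1) (zenum n2)))).

(* Main.v *)
Require Import Defs.
From Stdlib Require Import Reals ZArith Lra Lia Psatz Classical.
From Coquelicot Require Import Coquelicot.
Open Scope R_scope.

Fixpoint fs (f : nat -> R) (n : nat) : R :=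
  match n with O => 0 | S m => fs f m + f m end.

Lemma sum_n_fs f N : sum_n f N = fs f (S N).
Proof.
  induction N as [|N IH].
  - rewrite sum_O. simpl. symmetry. apply Rplus_0_l.
  - rewrite sum_Sn, IH. simpl. unfold plus. simpl. ring.
Qed.

Lemma fs_ext f g n : (forall i, (i < n)%nat -> f i = g i) -> fs f n = fs g n.
Proof.
  induction n as [|n IH]; intros H; simpl; auto.
  rewrite IH by (intros; apply H; lia). rewrite (H n) by lia. auto.
Qed.

Lemma fs_le f g n : (forall i, (i < n)%nat -> f i <= g i) -> fs f n <= fs g n.
Proof.
  induction n as [|n IH]; intros H; simpl; [lra|].
  pose proof (IH (fun i Hi => H i ltac:(lia))). pose proof (H n ltac:(lia)). lra.
Qed.

Lemma fs_nonneg f n : (forall i, 0 <= f i) -> 0 <= fs f n.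
Proof. intros H; induction n; simpl; [lra|]. pose proof (H n); lra. Qed.

Lemma fs_add f g n : fs (fun i => f i + g i) n = fs f n + fs g n.
Proof. induction n; simpl; [ring|]. rewrite IHn; ring. Qed.

Lemma fs_scal c f n : fs (fun i => c * f i) n = c * fs f n.
Proof. induction n; simpl; [ring|]. rewrite IHn; ring. Qed.

Lemma fs_mono f n m : (forall i, 0 <= f i) -> (n <= m)%nat -> fs f n <= fs f m.
Proof.
  intros H Hnm. induction Hnm; [lra|]. simpl. pose proof (H m). lra.
Qed.

Lemma fs_le_Series a N : (forall n, 0 <= a n) -> ex_series a -> fs a N <= Series a.
Proof.
  intros Ha He.
  apply Rle_trans with (fs a (S N)). { simpl. pose proof (Ha N). lra. }
  rewrite <- sum_n_fs.
  apply (is_lim_seq_incr_compare (sum_n a) (Series a)).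
  - apply Series_correct in He. exact He.
  - intros n. rewrite sum_Sn. unfold plus; simpl. pose proof (Ha (S n)). lra.
Qed.

Lemma series_bound (b : nat -> R) M :
  (forall n, 0 <= b n) -> (forall N, fs b N <= M) -> ex_series b /\ Series b <= M.
Proof.
  intros Hb HM.
  assert (Hinc : forall n, sum_n b n <= sum_n b (S n)).
  { intros n. rewrite sum_Sn. unfold plus; simpl. pose proof (Hb (S n)). lra. }
  assert (Hbd : forall n, sum_n b n <= M). { intros n. rewrite sum_n_fs. apply HM. }
  destruct (ex_finite_lim_seq_incr _ M Hinc Hbd) as [l Hl].
  split.
  - exists l. exact Hl.
  - unfold Series. rewrite (is_lim_seq_unique _ _ Hl). simpl.
    apply (is_lim_seq_le (sum_n b) (fun _ => M) l M); auto. apply is_lim_seq_const.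
Qed.

Lemma series_cmp (a b : nat -> R) :
  (forall n, 0 <= a n <= b n) -> ex_series b -> ex_series a /\ Series a <= Series b.
Proof.
  intros H Hb. split.
  - apply (ex_series_le a b); auto. intros n. destruct (H n).
    change (norm (a n)) with (Rabs (a n)). rewrite Rabs_pos_eq; lra.
  - apply Series_le; auto.
Qed.
Lemma fs_zero g n : (forall i, (i < n)%nat -> g i = 0) -> fs g n = 0.
Proof.
  intros H. rewrite (fs_ext g (fun _ => 0)) by auto. clear. induction n; simpl; [ring|]. rewrite IHn; ring.
Qed.

Lemma fs_single g n i0 : (i0 < n)%nat -> (forall i, (i < n)%nat -> i <> i0 -> g i = 0) -> fs g n = g i0.
Proof.
  induction n as [|n IH]; intros Hi H; [lia|]. simpl.
  destruct (Nat.eq_dec i0 n) as [->|Hne].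
  - rewrite fs_zero. ring. intros i Hi'. apply H; lia.
  - rewrite IH by (try lia; intros; apply H; lia). rewrite (H n) by lia. ring.
Qed.


Lemma inj_series (a b : nat -> R) (p : nat -> nat) :
  (forall n, 0 <= a n) -> ex_series a -> (forall n, 0 <= b n) ->
  (forall n, b n <= a (p n)) ->
  (forall i j, b i <> 0 -> b j <> 0 -> p i = p j -> i = j) ->
  ex_series b /\ Series b <= Series a.
Proof.
  intros Ha Hea Hb Hba Hinj.
  apply series_bound; auto. intros N.
  assert (HM : exists M, forall i, (i < N)%nat -> (p i < M)%nat).
  { induction N as [|N [M HM]]. exists O; intros; lia.
    exists (Nat.max M (S (p N))). intros i Hi.
    destruct (Nat.eq_dec i N) as [->|]; [lia|]. specialize (HM i ltac:(lia)); lia. }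
  destruct HM as [M HM].
  assert (C : forall M N, fs (fun i => if (p i <? M)%nat then b i else 0) N <= fs a M).
  { clear N HM. intros M0. induction M0 as [|M0 IH]; intros N.
    - rewrite fs_zero. simpl; lra. intros i _. destruct (p i <? 0)%nat eqn:E; auto.
      apply Nat.ltb_lt in E; lia.
    - rewrite (fs_ext _ (fun i => (if (p i <? M0)%nat then b i else 0) +
                                   (if (p i =? M0)%nat then b i else 0))).
      2:{ intros i _. destruct (Nat.ltb_spec (p i) (S M0)), (Nat.ltb_spec (p i) M0), (Nat.eqb_spec (p i) M0); try lia; ring. }
      rewrite fs_add. simpl. specialize (IH N).
      enough (fs (fun i => if (p i =? M0)%nat then b i else 0) N <= a M0) by lra.
      destruct (classic (exists i0, (i0 < N)%nat /\ p i0 = M0 /\ b i0 <> 0)) as [[i0 [H1 [H2 H3]]]|Hn].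
      + rewrite (fs_single _ _ i0 H1).
        * rewrite H2, Nat.eqb_refl. rewrite <- H2. apply Hba.
        * intros i Hi Hne. destruct (p i =? M0)%nat eqn:E; auto. apply Nat.eqb_eq in E.
          destruct (Req_dec (b i) 0); auto. exfalso. apply Hne. apply Hinj; auto; congruence.
      + rewrite fs_zero. apply Ha. intros i Hi. destruct (p i =? M0)%nat eqn:E; auto.
        apply Nat.eqb_eq in E. destruct (Req_dec (b i) 0); auto. exfalso; apply Hn; eauto. }
  specialize (C M N).
  rewrite (fs_ext _ b) in C.
  - pose proof (fs_le_Series a M Ha Hea). lra.
  - intros i Hi. specialize (HM i Hi). apply Nat.ltb_lt in HM. rewrite HM. auto.
Qed.

Lemma real_cs X A B : 0 <= X -> 0 <= A -> 0 <= B ->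
  (forall l, 0 < l -> X <= (l * A + B / l) / 2) -> X <= sqrt A * sqrt B.
Proof.
  intros HX HA HB H.
  assert (0 <= sqrt A * sqrt B) by (apply Rmult_le_pos; apply sqrt_pos).
  destruct (Req_dec X 0) as [->|HX0]; [lra|].
  destruct (Req_dec A 0) as [->|HA0].
  - exfalso. specialize (H ((B+1)/X) ltac:(apply Rdiv_lt_0_compat; lra)).
    assert (B / ((B + 1) / X) = B * X / (B+1)) by (field; lra).
    rewrite H1 in H. apply Rmult_le_compat_r with (r := B+1) in H; [|lra].
    replace ((((B + 1) / X) * 0 + B * X / (B + 1)) / 2 * (B + 1)) with (B*X/2) in H by (field; lra).
    nra.
  - specialize (H (X/A) ltac:(apply Rdiv_lt_0_compat; lra)).
    replace ((X / A * A + B / (X / A)) / 2) with ((X + A*B/X)/2) in H by (field; lra).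
    assert (X*X <= A*B).
    { apply Rmult_le_compat_r with (r := X) in H; [|lra].
      replace ((X + A * B / X) / 2 * X) with ((X*X + A*B)/2) in H by (field; lra). lra. }
    rewrite <- sqrt_mult by lra. rewrite <- (sqrt_square X) by lra. apply sqrt_le_1_alt. lra.
Qed.

Lemma series_cs (a b : nat -> R) :
  (forall n, 0 <= a n) -> (forall n, 0 <= b n) ->
  ex_series (fun n => a n ^ 2) -> ex_series (fun n => b n ^ 2) ->
  ex_series (fun n => a n * b n) /\
  Series (fun n => a n * b n) <= sqrt (Series (fun n => a n ^ 2)) * sqrt (Series (fun n => b n ^ 2)).
Proof.
  intros Ha Hb HA HB.
  set (SA := Series (fun n => a n ^ 2)). set (SB := Series (fun n => b n ^ 2)).
  assert (Hsa : forall N, fs (fun n => a n ^ 2) N <= SA).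
  { intros; apply fs_le_Series; auto. intros; apply pow2_ge_0. }
  assert (Hsb : forall N, fs (fun n => b n ^ 2) N <= SB).
  { intros; apply fs_le_Series; auto. intros; apply pow2_ge_0. }
  assert (Key : forall l, 0 < l -> forall N, fs (fun n => a n * b n) N <= (l * SA + SB / l) / 2).
  { intros l Hl N. apply Rle_trans with (fs (fun n => (l * a n ^ 2 + / l * b n ^ 2) / 2) N).
    - apply fs_le. intros i _.
      assert (0 <= (l * a i - b i)^2 / l) by (apply Rdiv_le_0_compat; [apply pow2_ge_0|lra]).
      assert ((l * a i ^ 2 + / l * b i ^ 2) / 2 - a i * b i = (l * a i - b i)^2 / l / 2) by (field; lra).
      lra.
    - rewrite (fs_ext _ (fun n => (/2 * l) * a n ^ 2 + (/2 * /l) * b n ^ 2)) by (intros; field; lra).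
      rewrite fs_add, !fs_scal. specialize (Hsa N). specialize (Hsb N).
      assert (0 < /l) by (apply Rinv_0_lt_compat; lra).
      unfold Rdiv. nra. }
  assert (Hab : forall n, 0 <= a n * b n) by (intros; apply Rmult_le_pos; auto).
  destruct (series_bound _ _ Hab (Key 1 ltac:(lra))) as [He _].
  split; auto.
  apply real_cs.
  - apply Rle_trans with (Series (fun n => 0 * (a n * b n))).
    + rewrite Series_scal_l; lra.
    + apply Series_le; auto. intros n; specialize (Hab n); split; lra.
  - unfold SA. apply Rle_trans with (fs (fun n => a n ^ 2) 0); [simpl; lra|]. apply Hsa.
  - unfold SB. apply Rle_trans with (fs (fun n => b n ^ 2) 0); [simpl; lra|]. apply Hsb.
  - intros l Hl. apply (series_bound _ _ Hab (Key l Hl)).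
Qed.

Lemma ln_lower y : 0 < y -> 1 - / y <= ln y.
Proof.
  intros Hy. pose proof (exp_ineq1_le (- ln y)). rewrite exp_Ropp, exp_ln in H by lra. lra.
Qed.

Lemma telescope x s : 0 < x -> 0 < s ->
  Rpower (x + 1) (- (s + 1)) <= (Rpower x (- s) - Rpower (x + 1) (- s)) / s.
Proof.
  intros Hx Hs. unfold Rpower.
  set (L1 := ln x). set (L2 := ln (x + 1)).
  assert (HL : 1 / (x + 1) <= L2 - L1).
  { unfold L1, L2. rewrite <- ln_div by lra. pose proof (ln_lower ((x+1)/x) ltac:(apply Rdiv_lt_0_compat; lra)).
    replace (1 / (x+1)) with (1 - / ((x + 1) / x)) by (field; lra). lra. }
  assert (E1 : exp (- (s + 1) * L2) = exp (- s * L2) * / (x + 1)).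
  { replace (- (s + 1) * L2) with (- s * L2 + - L2) by ring. rewrite exp_plus, exp_Ropp.
    unfold L2. rewrite exp_ln by lra. auto. }
  assert (E2 : exp (- s * L1) = exp (- s * L2) * exp (s * (L2 - L1))).
  { rewrite <- exp_plus. f_equal. ring. }
  pose proof (exp_ineq1_le (s * (L2 - L1))).
  pose proof (exp_pos (- s * L2)).
  rewrite E1, E2. apply Rmult_le_reg_r with s; [lra|].
  replace ((exp (- s * L2) * exp (s * (L2 - L1)) - exp (- s * L2)) / s * s)
    with (exp (- s * L2) * (exp (s * (L2 - L1)) - 1)) by (field; lra).
  apply Rle_trans with (exp (- s * L2) * (s * (L2 - L1))).
  - replace (exp (- s * L2) * / (x + 1) * s) with (exp (- s * L2) * (s * (1 / (x+1)))) by (field; lra).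
    apply Rmult_le_compat_l; [lra|]. apply Rmult_le_compat_l; lra.
  - apply Rmult_le_compat_l; lra.
Qed.

Lemma pseries_fs s N : 0 < s ->
  fs (fun n => Rpower (INR n + 1) (- (s + 1))) (S N) <= 1 + (1 - Rpower (INR N + 1) (- s)) / s.
Proof.
  intros Hs. induction N as [|N IH].
  - simpl. unfold Rpower. replace (0 + 1) with 1 by ring. rewrite ln_1, !Rmult_0_r, exp_0.
    replace ((1 - 1) / s) with 0 by (field; lra). lra.
  - change (fs (fun n => Rpower (INR n + 1) (- (s + 1))) (S (S N))) with
      (fs (fun n => Rpower (INR n + 1) (- (s + 1))) (S N) + Rpower (INR (S N) + 1) (- (s + 1))).
    rewrite S_INR. pose proof (telescope (INR N + 1) s ltac:(pose proof (pos_INR N); lra) Hs).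
    assert (((1 - Rpower (INR N + 1) (- s)) / s) + (Rpower (INR N + 1) (- s) - Rpower (INR N + 1 + 1) (- s)) / s
            = (1 - Rpower (INR N + 1 + 1) (- s)) / s) by (field; lra).
    lra.
Qed.

Lemma pseries s : 0 < s -> ex_series (fun n => Rpower (INR n + 1) (- (s + 1))).
Proof.
  intros Hs. apply (series_bound _ (1 + 1 / s)).
  - intros; unfold Rpower; left; apply exp_pos.
  - intros N. destruct N. simpl. assert (0 < 1/s) by (apply Rdiv_lt_0_compat; lra). lra.
    pose proof (pseries_fs s N Hs). assert (0 < Rpower (INR N + 1) (- s)) by (unfold Rpower; apply exp_pos).
    unfold Rdiv in *. assert (0 < / s) by (apply Rinv_0_lt_compat; lra). nra.
Qed.

Definition zinv (z : Z) : nat :=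
  if (0 <? z)%Z then (2 * (Z.to_nat z - 1))%nat else (2 * (Z.to_nat (- z) - 1) + 1)%nat.

Lemma zenum_cases n : (Nat.even n = true /\ n = (2 * Nat.div2 n)%nat) \/
                      (Nat.even n = false /\ n = (2 * Nat.div2 n + 1)%nat).
Proof.
  pose proof (Nat.div2_odd n). rewrite <- Nat.negb_odd. destruct (Nat.odd n); simpl in *; [right|left]; split; auto; lia.
Qed.

Lemma zenum_zinv z : z <> 0%Z -> zenum (zinv z) = z.
Proof.
  intros Hz. unfold zinv, zenum. destruct (Z.ltb_spec 0 z).
  - rewrite Nat.even_even, Nat.div2_double. lia.
  - rewrite Nat.even_odd, Nat.div2_odd'. lia.
Qed.

Lemma zinv_zenum n : zinv (zenum n) = n.
Proof.
  unfold zinv, zenum. destruct (zenum_cases n) as [[E H]|[E H]]; rewrite E.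
  - destruct (Z.ltb_spec 0 (Z.of_nat (Nat.div2 n + 1))); lia.
  - destruct (Z.ltb_spec 0 (- Z.of_nat (Nat.div2 n + 1))); lia.
Qed.

Lemma zenum_inj n m : zenum n = zenum m -> n = m.
Proof. intros H. rewrite <- (zinv_zenum n), <- (zinv_zenum m), H. auto. Qed.

Lemma zenum_nz n : zenum n <> 0%Z.
Proof. unfold zenum. destruct (Nat.even n); set (d := Nat.div2 n); lia. Qed.

Lemma zenum_abs n : IZR (Z.abs (zenum n)) = INR (Nat.div2 n) + 1.
Proof.
  unfold zenum.
  assert (IZR (Z.of_nat (Nat.div2 n + 1)) = INR (Nat.div2 n) + 1).
  { rewrite <- INR_IZR_INZ, plus_INR. simpl. ring. }
  destruct (Nat.even n); [|rewrite Z.abs_opp]; rewrite Z.abs_eq; auto; set (d := Nat.div2 n); lia.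
Qed.

Lemma zseries e : e < -1 -> ex_series (fun n => Rpower (IZR (Z.abs (zenum n))) e).
Proof.
  intros He.
  assert (Hb : ex_series (fun n => Rpower 2 (- e) * Rpower (INR n + 1) e)).
  { pose proof (pseries (- e - 1) ltac:(lra)). replace (- (- e - 1 + 1)) with e in H by ring.
    apply (ex_series_scal_l (Rpower 2 (- e))) in H. exact H. }
  apply (series_cmp _ (fun n => Rpower 2 (- e) * Rpower (INR n + 1) e)); auto. intros n. split; [unfold Rpower; left; apply exp_pos|].
  rewrite zenum_abs. unfold Rpower. rewrite <- exp_plus.
  pose proof (pos_INR (Nat.div2 n)).
  assert (Hn : INR n + 1 <= 2 * (INR (Nat.div2 n) + 1)).
  { assert (n <= 2 * Nat.div2 n + 1)%nat by (pose proof (Nat.div2_odd n); destruct (Nat.odd n); simpl in *; lia).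
    apply le_INR in H0. rewrite plus_INR, mult_INR in H0. simpl in H0. lra. }
  assert (ln ((INR n + 1) / 2) <= ln (INR (Nat.div2 n) + 1)).
  { apply ln_le. pose proof (pos_INR n). lra. lra. }
  rewrite ln_div in H0 by (pose proof (pos_INR n); lra).
  destruct (Rle_lt_or_eq_dec _ _ (Rmult_le_compat_neg_l e _ _ ltac:(lra) H0)) as [Hl|Hl];
  [left; apply exp_increasing; lra | right; f_equal; lra].
Qed.

Lemma Series_nonneg a : (forall n, 0 <= a n) -> ex_series a -> 0 <= Series a.
Proof.
  intros H He. apply Rle_trans with (Series (fun n => 0 * a n)).
  - rewrite Series_scal_l; lra.
  - apply Series_le; auto. intros n; specialize (H n); split; lra.
Qed.

Definition G (w : seqZ0) (c k2 : Z) : R :=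
  if Z.eqb (c - k2)%Z 0%Z then 0 else Cmod (w (c - k2)%Z).

Lemma G_nonneg w c k2 : 0 <= G w c k2.
Proof. unfold G. destruct (Z.eqb (c - k2)%Z 0%Z); [lra|apply Cmod_ge_0]. Qed.

Lemma Cmod_cexpi th : Cmod (cexpi th) = 1.
Proof.
  unfold Cmod, cexpi. simpl fst; simpl snd. rewrite <- sqrt_1. f_equal.
  pose proof (sin2_cos2 th). unfold Rsqr in H. nra.
Qed.

Lemma term_cmod t u v w k k1 k2 : k1 <> 0%Z ->
  Cmod (R3_term t u v w k k1 k2) = Cmod (u k1) / IZR (Z.abs k1) * (Cmod (v k2) * G w (k - k1)%Z k2).
Proof.
  intros Hk1. unfold R3_term, G. destruct (Z.eqb (k - k1 - k2)%Z 0%Z).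
  - rewrite Cmod_0. ring.
  - rewrite !Cmod_mult, Cmod_div, Cmod_cexpi, Cmod_R, abs_IZR.
    + field. apply not_0_IZR in Hk1. pose proof (Rabs_pos_lt _ Hk1). lra.
    + intros H. apply (f_equal fst) in H. simpl in H. apply not_0_IZR in Hk1. auto.
Qed.

Lemma Hdot_nonneg s v n : 0 <= Hdot_terms s v n.
Proof.
  unfold Hdot_terms, kpow, Rpower. apply Rmult_le_pos; [left; apply exp_pos|apply pow2_ge_0].
Qed.

Lemma Ht0 v n : Hdot_terms 0 v n = Cmod (v (zenum n)) ^ 2.
Proof.
  unfold Hdot_terms, kpow, Rpower. replace (2 * 0 * ln (IZR (Z.abs (zenum n)))) with 0 by ring.
  rewrite exp_0; ring.
Qed.

Lemma absz_pos n : 0 < IZR (Z.abs (zenum n)).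
Proof. rewrite zenum_abs. pose proof (pos_INR (Nat.div2 n)). lra. Qed.

Lemma inner_cs v w c : in_Hdot 0 v -> in_Hdot 0 w ->
  ex_series (fun n => Cmod (v (zenum n)) * G w c (zenum n)) /\
  Series (fun n => Cmod (v (zenum n)) * G w c (zenum n)) <= Hdot_norm 0 v * Hdot_norm 0 w.
Proof.
  intros Hv Hw.
  assert (Ev : forall n, Cmod (v (zenum n)) ^ 2 = Hdot_terms 0 v n) by (intros; rewrite Ht0; auto).
  assert (HA : ex_series (fun n => Cmod (v (zenum n)) ^ 2)).
  { apply (ex_series_ext (Hdot_terms 0 v)); auto. }
  assert (HB : ex_series (fun n => G w c (zenum n) ^ 2) /\
               Series (fun n => G w c (zenum n) ^ 2) <= Series (Hdot_terms 0 w)).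
  { apply (inj_series _ _ (fun n => zinv (c - zenum n)%Z)).
    - apply Hdot_nonneg.
    - exact Hw.
    - intros; apply pow2_ge_0.
    - intros n. unfold G. destruct (Z.eqb_spec (c - zenum n)%Z 0%Z).
      + simpl. rewrite Rmult_0_l. apply Hdot_nonneg.
      + rewrite Ht0, zenum_zinv; auto. lra.
    - intros i j Hi Hj Hp. unfold G in Hi, Hj.
      destruct (Z.eqb_spec (c - zenum i)%Z 0%Z); [simpl in Hi; lra|].
      destruct (Z.eqb_spec (c - zenum j)%Z 0%Z); [simpl in Hj; lra|].
      apply (f_equal zenum) in Hp. rewrite !zenum_zinv in Hp by auto.
      apply zenum_inj. lia. }
  destruct HB as [HB1 HB2].
  destruct (series_cs (fun n => Cmod (v (zenum n))) (fun n => G w c (zenum n))) as [H1 H2]; auto.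
  - intros; apply Cmod_ge_0.
  - intros; apply G_nonneg.
  - split; auto. eapply Rle_trans; [exact H2|].
    unfold Hdot_norm. rewrite (Series_ext _ (Hdot_terms 0 v)) by auto.
    apply Rmult_le_compat_l; [apply sqrt_pos|]. apply sqrt_le_1_alt; auto.
Qed.

Lemma outer_cs u beta : beta < 1/2 -> in_Hdot (- beta) u ->
  ex_series (fun n => Cmod (u (zenum n)) / IZR (Z.abs (zenum n))) /\
  Series (fun n => Cmod (u (zenum n)) / IZR (Z.abs (zenum n))) <=
  Hdot_norm (- beta) u * sqrt (Series (fun n => Rpower (IZR (Z.abs (zenum n))) (2 * beta - 2))).
Proof.
  intros Hb Hu.
  set (x := fun n => IZR (Z.abs (zenum n))).
  assert (Ea : forall n, (Rpower (x n) (- beta) * Cmod (u (zenum n))) ^ 2 = Hdot_terms (- beta) u n).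
  { intros n. unfold Hdot_terms, kpow. fold (x n). 
    replace (2 * - beta) with (- beta + - beta) by ring. rewrite Rpower_plus. ring. }
  assert (Eb : forall n, Rpower (x n) (beta - 1) ^ 2 = Rpower (x n) (2 * beta - 2)).
  { intros n. replace (2 * beta - 2) with ((beta - 1) + (beta - 1)) by ring. rewrite Rpower_plus. ring. }
  assert (Eab : forall n, Rpower (x n) (- beta) * Cmod (u (zenum n)) * Rpower (x n) (beta - 1) =
                          Cmod (u (zenum n)) / IZR (Z.abs (zenum n))).
  { intros n. fold (x n). pose proof (absz_pos n). fold (x n) in H.
    replace (Rpower (x n) (- beta) * Cmod (u (zenum n)) * Rpower (x n) (beta - 1))
      with (Cmod (u (zenum n)) * (Rpower (x n) (- beta) * Rpower (x n) (beta - 1))) by ring.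
    rewrite <- Rpower_plus. replace (- beta + (beta - 1)) with (- (1)) by ring.
    rewrite Rpower_Ropp, Rpower_1 by auto. unfold Rdiv. auto. }
  destruct (series_cs (fun n => Rpower (x n) (- beta) * Cmod (u (zenum n)))
                      (fun n => Rpower (x n) (beta - 1))) as [H1 H2].
  - intros; apply Rmult_le_pos; [unfold Rpower; left; apply exp_pos|apply Cmod_ge_0].
  - intros; unfold Rpower; left; apply exp_pos.
  - apply (ex_series_ext (Hdot_terms (- beta) u)); auto.
  - apply (ex_series_ext (fun n => Rpower (x n) (2 * beta - 2))); [intros; auto|].
    apply zseries. lra.
  - split.
    + apply (ex_series_ext _ _ Eab); auto.
    + rewrite <- (Series_ext _ _ Eab). eapply Rle_trans; [exact H2|].
      unfold Hdot_norm. rewrite (Series_ext _ (Hdot_terms (- beta) u)) by auto.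
      rewrite (Series_ext (fun n => Rpower (x n) (beta - 1) ^ 2) (fun n => Rpower (x n) (2 * beta - 2))) by auto. unfold x. lra.
Qed.

Lemma Abound t u v w beta k : beta < 1/2 ->
  in_Hdot (- beta) u -> in_Hdot 0 v -> in_Hdot 0 w ->
  R3_abs_summable t u v w k /\
  Series (fun n1 => Series (fun n2 => Cmod (R3_term t u v w k (zenum n1) (zenum n2)))) <=
  Hdot_norm (- beta) u * sqrt (Series (fun n => Rpower (IZR (Z.abs (zenum n))) (2 * beta - 2)))
  * (Hdot_norm 0 v * Hdot_norm 0 w).
Proof.
  intros Hb Hu Hv Hw.
  set (K0 := Hdot_norm 0 v * Hdot_norm 0 w).
  set (c1 := fun n => Cmod (u (zenum n)) / IZR (Z.abs (zenum n))).
  assert (Hc1 : forall n, 0 <= c1 n).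
  { intros n. unfold c1. apply Rdiv_le_0_compat; [apply Cmod_ge_0|apply absz_pos]. }
  assert (E : forall n1 n2, Cmod (R3_term t u v w k (zenum n1) (zenum n2)) =
      c1 n1 * (Cmod (v (zenum n2)) * G w (k - zenum n1)%Z (zenum n2))).
  { intros. apply term_cmod. apply zenum_nz. }
  assert (In : forall n1, ex_series (fun n2 => Cmod (R3_term t u v w k (zenum n1) (zenum n2))) /\
      0 <= Series (fun n2 => Cmod (R3_term t u v w k (zenum n1) (zenum n2))) <= c1 n1 * K0).
  { intros n1. destruct (inner_cs v w (k - zenum n1)%Z Hv Hw) as [H1 H2].
    assert (H3 : ex_series (fun n2 => c1 n1 * (Cmod (v (zenum n2)) * G w (k - zenum n1)%Z (zenum n2)))).
    { apply (ex_series_scal_l (c1 n1)) in H1. exact H1. }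
    split; [apply (ex_series_ext _ _ (fun n2 => eq_sym (E n1 n2))); auto|].
    rewrite (Series_ext _ _ (E n1)), Series_scal_l. split.
    - apply Rmult_le_pos; auto. apply Series_nonneg; auto.
      intros; apply Rmult_le_pos; [apply Cmod_ge_0|apply G_nonneg].
    - apply Rmult_le_compat_l; auto. }
  destruct (outer_cs u beta Hb Hu) as [O1 O2].
  assert (HB : ex_series (fun n1 => c1 n1 * K0)) by (apply ex_series_scal_r; exact O1).
  destruct (series_cmp (fun n1 => Series (fun n2 => Cmod (R3_term t u v w k (zenum n1) (zenum n2))))
                       (fun n1 => c1 n1 * K0)) as [S1 S2]; auto.
  { intros n1; apply In. }
  split.
  - split; auto. intros n1; apply In.
  - eapply Rle_trans; [exact S2|]. rewrite Series_scal_r.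
    apply Rmult_le_compat_r; [apply Rmult_le_pos; apply sqrt_pos|]. exact O2.
Qed.

Lemma proj_bound (f : C -> R) (x : nat -> nat -> C) :
  (forall z, Rabs (f z) <= Cmod z) ->
  (forall n1, ex_series (fun n2 => Cmod (x n1 n2))) ->
  ex_series (fun n1 => Series (fun n2 => Cmod (x n1 n2))) ->
  Rabs (Series (fun n1 => Series (fun n2 => f (x n1 n2)))) <=
  Series (fun n1 => Series (fun n2 => Cmod (x n1 n2))).
Proof.
  intros Hf H1 H2.
  assert (In : forall n1, ex_series (fun n2 => Rabs (f (x n1 n2))) /\
     Rabs (Series (fun n2 => f (x n1 n2))) <= Series (fun n2 => Cmod (x n1 n2))).
  { intros n1. destruct (series_cmp (fun n2 => Rabs (f (x n1 n2))) (fun n2 => Cmod (x n1 n2))) as [A B]; auto.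
    { intros; split; [apply Rabs_pos|auto]. }
    split; auto. eapply Rle_trans; [apply Series_Rabs; auto|auto]. }
  destruct (series_cmp (fun n1 => Rabs (Series (fun n2 => f (x n1 n2)))) (fun n1 => Series (fun n2 => Cmod (x n1 n2)))) as [A B]; auto.
  { intros; split; [apply Rabs_pos|apply In]. }
  eapply Rle_trans; [apply Series_Rabs; auto|auto].
Qed.

Lemma R3_bound t u v w k Q :
  R3_abs_summable t u v w k ->
  Series (fun n1 => Series (fun n2 => Cmod (R3_term t u v w k (zenum n1) (zenum n2)))) <= Q ->
  Cmod (R3 t u v w k) ^ 2 <= 2 * Q ^ 2.
Proof.
  intros [H1 H2] HQ.
  set (x := fun n1 n2 => R3_term t u v w k (zenum n1) (zenum n2)).
  pose proof (proj_bound fst x ltac:(intros z; eapply Rle_trans; [apply Rmax_l|apply Rmax_Cmod]) H1 H2) as P1.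
  pose proof (proj_bound snd x ltac:(intros z; eapply Rle_trans; [apply Rmax_r|apply Rmax_Cmod]) H1 H2) as P2.
  unfold R3, CSeries, Cmod. simpl fst; simpl snd.
  rewrite pow2_sqrt by (apply Rplus_le_le_0_compat; apply pow2_ge_0).
  change (Series (fun n1 => Series (fun n2 => Cmod (x n1 n2))) <= Q) in HQ.
  set (a := Series (fun n1 => Series (fun n2 => fst (x n1 n2)))) in *.
  set (b := Series (fun n1 => Series (fun n2 => snd (x n1 n2)))) in *.
  change (a ^ 2 + b ^ 2 <= 2 * Q ^ 2).
  assert (Rabs a <= Q) by lra. assert (Rabs b <= Q) by lra.
  unfold Rabs in *. destruct (Rcase_abs a), (Rcase_abs b); nra.
Qed.

Theorem lemma7p18 (S beta : R) (hS : 1/2 < S) (hbeta : beta < 1/2) :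
  exists c6' : R,
    forall (t : R) (u v w : seqZ0),
      in_Hdot (- beta) u -> in_Hdot 0 v -> in_Hdot 0 w ->
      (forall k : Z, k <> 0%Z -> R3_abs_summable t u v w k) /\
      in_Hdot (- S) (R3 t u v w) /\
      Hdot_norm (- S) (R3 t u v w)
        <= c6' * Hdot_norm (- beta) u * Hdot_norm 0 v * Hdot_norm 0 w.
Proof.
  set (Zb := Series (fun n => Rpower (IZR (Z.abs (zenum n))) (2 * beta - 2))).
  set (Zs := Series (fun n => Rpower (IZR (Z.abs (zenum n))) (2 * - S))).
  exists (sqrt (2 * Zs) * sqrt Zb).
  intros t u v w Hu Hv Hw.
  set (Q := Hdot_norm (- beta) u * sqrt Zb * (Hdot_norm 0 v * Hdot_norm 0 w)).
  assert (HQ : 0 <= Q).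
  { unfold Q, Hdot_norm. repeat apply Rmult_le_pos; apply sqrt_pos. }
  assert (HA : forall k, R3_abs_summable t u v w k /\ Cmod (R3 t u v w k) ^ 2 <= 2 * Q ^ 2).
  { intros k. destruct (Abound t u v w beta k hbeta Hu Hv Hw) as [A B].
    split; auto. apply R3_bound; auto. }
  assert (EZs : ex_series (fun n => Rpower (IZR (Z.abs (zenum n))) (2 * - S))) by (apply zseries; lra).
  assert (HZs : 0 <= Zs) by (apply Series_nonneg; auto; intros; unfold Rpower; left; apply exp_pos).
  destruct (series_cmp (Hdot_terms (- S) (R3 t u v w))
                       (fun n => Rpower (IZR (Z.abs (zenum n))) (2 * - S) * (2 * Q ^ 2))) as [S1 S2].
  { intros n. split; [apply Hdot_nonneg|]. unfold Hdot_terms, kpow.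
    apply Rmult_le_compat_l; [unfold Rpower; left; apply exp_pos|apply HA]. }
  { apply ex_series_scal_r; auto. }
  split; [intros k _; apply HA|]. split; [exact S1|].
  rewrite Series_scal_r in S2. fold Zs in S2.
  unfold Hdot_norm at 1. eapply Rle_trans; [apply sqrt_le_1_alt; exact S2|].
  replace (Zs * (2 * Q ^ 2)) with ((2 * Zs) * (Q * Q)) by ring.
  rewrite sqrt_mult, sqrt_square; auto; try lra.
  2: { apply Rmult_le_pos; auto. }
  unfold Q. right. ring.
Qed.
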